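(* Let $\Gamma$ be a digraph on a set $\Omega$ and let $\mathbf{a}=(\alpha_0,\alpha_1,\ldots)$ be an infinite walk in $\Gamma$ such that every vertex occurs only finitely many times in $\mathbf{a}$. Then there is a ray $\mathbf{r}$ in $\Gamma$ whose vertex sequence is a subsequence of $\mathbf{a}$ such that, for every infinite subset $\Sigma\subseteq\{\alpha_0,\alpha_1,\ldots\}$, we have both $\mathbf{r}\preccurlyeq\Sigma$ and $\Sigma\preccurlyeq\mathbf{r}$. Analogously, if $\mathbf{a}$ is an infinite anti-walk in which every vertex occurs only finitely many times, then $\mathbf{a}$ contains (as a subsequence) an anti-ray $\mathbf{r}$ with $\mathbf{r}\preccurlyeq\Sigma$ and $\Sigma\preccurlyeq\mathbf{r}$ for every infinite subset $\Sigma$ of the vertices of $\mathbf{a}$.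
   Context: A digraph on a set $\Omega$ is a subset $\Gamma\subseteq\Omega\times\Omega$; elements of $\Omega$ are vertices and elements of $\Gamma$ are edges. A walk is a finite or infinite sequence $(v_0,v_1,\ldots)$ of (not necessarily distinct) vertices with $(v_i,v_{i+1})\in\Gamma$ for all $i$; an anti-walk is such a sequence with $(v_{i+1},v_i)\in\Gamma$ for all $i$. A path is a walk consisting of pairwise distinct vertices (a single vertex is a path of length $0$). A ray is an infinite path; an anti-ray is an infinite anti-walk of pairwise distinct vertices. For infinite subsets $\Sigma',\Sigma\subseteq\Omega$ (rays and anti-rays are identified with their vertex sets), write $\Sigma'\preccurlyeq\Sigma$ if there exist infinitely many pairwise vertex-disjoint paths in $\Gamma$ (paths of length $0$ allowed), each with initial vertex in $\Sigma'$ and final vertex in $\Sigma$. *)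

(* Defs.v *)
(* A digraph on Omega is a relation G : Omega -> Omega -> Prop
   (edge set Gamma = {(u,v) | G u v}). Infinite sequences are functions nat -> Omega;
   finite paths are nonempty duplicate-free lists. *)
From Stdlib Require Import List.
Import ListNotations.

Section Digraph.
Context {Omega : Type} (G : Omega -> Omega -> Prop).

Definition inf_walk (a : nat -> Omega) : Prop := forall i, G (a i) (a (S i)).
Definition inf_antiwalk (a : nat -> Omega) : Prop := forall i, G (a (S i)) (a i).

Definition ray (r : nat -> Omega) : Prop :=
  inf_walk r /\ (forall i j, r i = r j -> i = j).
Definition antiray (r : nat -> Omega) : Prop :=
  inf_antiwalk r /\ (forall i j, r i = r j -> i = j).

Fixpoint chain (l : list Omega) : Prop :=
  match l with
  | x :: ((y :: _) as t) => G x y /\ chain t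
  | _ => True
  end.

(* a finite path (length 0 allowed = single vertex) *)
Definition path (p : list Omega) : Prop := p <> [] /\ NoDup p /\ chain p.

Definition path_from_to (p : list Omega) (x y : Omega) : Prop :=
  path p /\ hd_error p = Some x /\ last p x = y.

(* Sigma' ≼ Sigma : infinitely many pairwise vertex-disjoint paths from Sigma' to Sigma *)
Definition prec (S' S : Omega -> Prop) : Prop :=
  exists P : nat -> list Omega,
    (forall n, exists x y, S' x /\ S y /\ path_from_to (P n) x y) /\
    (forall n m, n <> m -> forall v, In v (P n) -> ~ In v (P m)).

End Digraph.

Definition infinite_set {Omega : Type} (S : Omega -> Prop) : Prop :=
  forall l : list Omega, exists x, S x /\ ~ In x l.

Definition finitely_often {Omega : Type} (a : nat -> Omega) : Prop :=
  forall v, exists N, forall i, a i = v -> i < N.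

Definition subseq_of {Omega : Type} (r a : nat -> Omega) : Prop :=
  exists f : nat -> nat, (forall i, f i < f (S i)) /\ (forall i, r i = a (f i)).

Definition vset {Omega : Type} (a : nat -> Omega) : Omega -> Prop :=
  fun v => exists i, a i = v.

(* Main.v *)
Require Import Defs.
From Stdlib Require Import List.
From Stdlib Require Import Arith Lia Classical ClassicalEpsilon.
Import ListNotations.

Lemma my_choice {A B : Type} (R : A -> B -> Prop) :
  (forall x, exists y, R x y) -> exists f, forall x, R x (f x).
Proof.
  intros H. exists (fun x => proj1_sig (constructive_indefinite_description _ (H x))).
  intros x. exact (proj2_sig (constructive_indefinite_description _ (H x))).
Qed.

Lemma last_cons_indep {Omega : Type} (z : Omega) l d d' : last (z :: l) d = last (z :: l) d'.
Proof. revert z. induction l as [|w l IH]; intros z; [reflexivity|]. change (last (w :: l) d = last (w :: l) d'). apply IH. Qed.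

Lemma lastidx {Omega : Type} (b : nat -> Omega) n :
  exists k, k <= n /\ b k = b 0 /\ forall m, k < m -> m <= n -> b m <> b 0.
Proof.
  induction n as [|n IH].
  - exists 0. split; [lia|split; [reflexivity|intros; lia]].
  - destruct (classic (b (S n) = b 0)) as [E|E].
    + exists (S n). split; [lia|split; [exact E|intros; lia]].
    + destruct IH as [k [Hk [Hb Hm]]]. exists k. split; [lia|split; [exact Hb|]].
      intros m H1 H2. destruct (Nat.eq_dec m (S n)) as [->|Hne]; [exact E|].
      apply Hm; lia.
Qed.

Lemma path_of_seq {Omega : Type} (G : Omega -> Omega -> Prop) :
  forall n (b : nat -> Omega), (forall m, m < n -> G (b m) (b (S m))) ->
  exists p, path G p /\ hd_error p = Some (b 0) /\ last p (b 0) = b n /\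
    (forall v, In v p -> exists m, m <= n /\ b m = v).
Proof.
  intros n. induction n as [n IH] using (well_founded_induction Wf_nat.lt_wf).
  intros b H.
  destruct (lastidx b n) as [k [Hk [Hbk Hm]]].
  destruct (Nat.eq_dec k n) as [->|Hne].
  - exists [b 0]. split; [|split; [reflexivity|split]].
    + split; [discriminate|split; [constructor; [simpl; tauto|constructor]|simpl; exact I]].
    + simpl. symmetry; exact Hbk.
    + intros v [<-|[]]. exists 0. split; [lia|reflexivity].
  - destruct (IH (n - S k) ltac:(lia) (fun m => b (S k + m))) as [p' [Hp' [Hh [Hl Hv]]]].
    { intros m Hm'. replace (S k + S m) with (S (S k + m)) by lia. apply H. lia. }
    destruct p' as [|z p''].
    { destruct Hp' as [Hne' _]. congruence. }
    simpl in Hh. injection Hh as Hz.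
    exists (b 0 :: z :: p''). split; [|split; [reflexivity|split]].
    + destruct Hp' as [_ [Hnd Hch]]. split; [discriminate|split].
      * constructor; [|exact Hnd].
        intros Hin. destruct (Hv _ Hin) as [m [Hm1 Hm2]].
        apply (Hm (S k + m)); [lia|lia|exact Hm2].
      * simpl. split; [|exact Hch].
        rewrite Hz, <- Hbk, ?Nat.add_0_r. apply H. lia.
    + change (last (z :: p'') (b 0) = b n).
      rewrite (last_cons_indep z p'' (b 0) (b (S k + 0))), Hl.
      f_equal. lia.
    + intros v [<-|Hin].
      * exists 0. split; [lia|reflexivity].
      * destruct (Hv _ Hin) as [m [Hm1 Hm2]]. exists (S k + m). split; [lia|exact Hm2].
Qed.

Lemma path_of_seq' {Omega : Type} (G : Omega -> Omega -> Prop) n (b : nat -> Omega) x y :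
  b 0 = x -> b n = y -> (forall m, m < n -> G (b m) (b (S m))) ->
  exists p, path_from_to G p x y /\ (forall v, In v p -> exists m, m <= n /\ b m = v).
Proof.
  intros Hx Hy H. destruct (path_of_seq G n b H) as [p [H1 [H2 [H3 H4]]]].
  exists p. subst. split; [split; [exact H1|split; [exact H2|exact H3]]|exact H4].
Qed.

Lemma seg_walk {Omega : Type} (G : Omega -> Omega -> Prop) a i j :
  inf_walk G a -> i <= j ->
  exists p, path_from_to G p (a i) (a j) /\
    (forall v, In v p -> exists k, i <= k /\ k <= j /\ a k = v).
Proof.
  intros Hw Hij.
  destruct (path_of_seq' G (j - i) (fun m => a (i + m)) (a i) (a j)) as [p [Hp Hv]].
  - f_equal; lia.
  - f_equal; lia.
  - intros m Hm. replace (i + S m) with (S (i + m)) by lia. apply Hw.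
  - exists p. split; [exact Hp|]. intros v Hin. destruct (Hv v Hin) as [m [Hm1 Hm2]].
    exists (i + m). split; [lia|split; [lia|exact Hm2]].
Qed.

Lemma seg_anti {Omega : Type} (G : Omega -> Omega -> Prop) a i j :
  inf_antiwalk G a -> i <= j ->
  exists p, path_from_to G p (a j) (a i) /\
    (forall v, In v p -> exists k, i <= k /\ k <= j /\ a k = v).
Proof.
  intros Hw Hij.
  destruct (path_of_seq' G (j - i) (fun m => a (j - m)) (a j) (a i)) as [p [Hp Hv]].
  - f_equal; lia.
  - f_equal; lia.
  - intros m Hm. replace (j - m) with (S (j - S m)) by lia. apply Hw.
  - exists p. split; [exact Hp|]. intros v Hin. destruct (Hv v Hin) as [m [Hm1 Hm2]].
    exists (j - m). split; [lia|split; [lia|exact Hm2]].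
Qed.

Fixpoint iterL (L : nat -> nat) (k : nat) : nat :=
  match k with 0 => L 0 | S k' => L (S (iterL L k')) end.

Lemma incr_mono (h : nat -> nat) : (forall n, h n < h (S n)) ->
  forall n m, n < m -> h n < h m.
Proof.
  intros H n m. induction m as [|m IH]; intros Hl; [lia|].
  destruct (Nat.eq_dec n m) as [->|Hne]; [apply H|]. specialize (IH ltac:(lia)).
  specialize (H m). lia.
Qed.

Lemma core {Omega : Type} (a : nat -> Omega) : finitely_often a ->
  exists f : nat -> nat, (forall k, k <= f k) /\ (forall k, f k < f (S k)) /\
    (forall k, a (f (S k)) = a (S (f k))) /\ (forall i j, a (f i) = a (f j) -> i = j).
Proof.
  intros Hfin.
  assert (HL : forall i, exists j, i <= j /\ a j = a i /\ forall m, j < m -> a m <> a i).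
  { intros i. destruct (Hfin (a i)) as [N HN].
    destruct (lastidx (fun m => a (i + m)) N) as [k [Hk [Hb Hm]]].
    exists (i + k). split; [lia|split].
    - rewrite Hb. f_equal; lia.
    - intros m Hm' E. destruct (le_lt_dec m (i + N)) as [Hle|Hlt].
      + apply (Hm (m - i)); [lia|lia|]. replace (i + (m - i)) with m by lia.
        rewrite E. f_equal; lia.
      + specialize (HN m E). lia. }
  destruct (my_choice _ HL) as [L HLp].
  exists (iterL L).
  assert (Hincr : forall k, iterL L k < iterL L (S k)).
  { intros k. simpl. destruct (HLp (S (iterL L k))) as [H1 _]. lia. }
  assert (Hkey : forall k m, iterL L k < m -> a m <> a (iterL L k)).
  { intros k m Hm. destruct k as [|k]; simpl in *.
    - destruct (HLp 0) as [_ [H2 H3]]. rewrite H2. apply H3. exact Hm.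
    - destruct (HLp (S (iterL L k))) as [_ [H2 H3]]. rewrite H2. apply H3. exact Hm. }
  split; [|split; [exact Hincr|split]].
  - intros k. induction k as [|k IH]; [lia|]. specialize (Hincr k). lia.
  - intros k. simpl. destruct (HLp (S (iterL L k))) as [_ [H2 _]]. exact H2.
  - intros i j E. destruct (Nat.lt_total i j) as [Hl|[Hl|Hl]]; [|exact Hl|].
    + exfalso. apply (Hkey i (iterL L j)); [apply incr_mono; auto|auto].
    + exfalso. apply (Hkey j (iterL L i)); [apply incr_mono; auto|auto].
Qed.

Lemma cut {Omega : Type} (a : nat -> Omega) : finitely_often a ->
  forall x, exists c, forall i j, i <= x -> a j = a i -> j <= c.
Proof.
  intros Hfin x. induction x as [|x [c IH]].
  - destruct (Hfin (a 0)) as [N HN]. exists N. intros i j Hi E.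
    assert (i = 0) by lia. subst. specialize (HN j E). lia.
  - destruct (Hfin (a (S x))) as [N HN]. exists (Nat.max c N). intros i j Hi E.
    destruct (Nat.eq_dec i (S x)) as [->|Hne].
    + specialize (HN j E). lia.
    + specialize (IH i j ltac:(lia) E). lia.
Qed.

Lemma prec_of_step {Omega : Type} (G : Omega -> Omega -> Prop) (a : nat -> Omega)
  (A B : Omega -> Prop) : finitely_often a ->
  (forall N, exists p hi x y, A x /\ B y /\ path_from_to G p x y /\
     (forall v, In v p -> exists i, N <= i /\ i <= hi /\ a i = v)) ->
  prec G A B.
Proof.
  intros Hfin Hstep.
  destruct (my_choice _ (cut a Hfin)) as [Cf HCf].
  assert (Hst : forall N, exists ph : list Omega * nat,
    (exists x y, A x /\ B y /\ path_from_to G (fst ph) x y) /\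
     (forall v, In v (fst ph) -> exists i, N <= i /\ i <= snd ph /\ a i = v)).
  { intros N. destruct (Hstep N) as [p [hi [x [y [H1 [H2 [H3 H4]]]]]]].
    exists (p, hi). simpl. split; [exists x, y; auto|exact H4]. }
  destruct (my_choice _ Hst) as [St HSt].
  set (Ns := fix Ns n := match n with 0 => 0 | S n' => S (Cf (snd (St (Ns n')))) end).
  assert (HNs : forall n, Ns (S n) = S (Cf (snd (St (Ns n))))) by reflexivity.
  assert (HCfge : forall x, x <= Cf x).
  { intros x. apply (HCf x x x); auto. }
  assert (Hincr : forall n, Ns n < Ns (S n)).
  { intros n. rewrite HNs. destruct (HSt (Ns n)) as [[x [y [_ [_ [[Hne _] _]]]]] Hv].
    assert (Hz : exists z, In z (fst (St (Ns n)))).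
    { destruct (fst (St (Ns n))) as [|z l]; [congruence|exists z; left; reflexivity]. }
    destruct Hz as [z Hz].
    destruct (Hv z Hz) as [i [Hi1 [Hi2 _]]].
    specialize (HCfge (snd (St (Ns n)))). lia. }
  exists (fun n => fst (St (Ns n))). split.
  - intros n. destruct (HSt (Ns n)) as [H _]. exact H.
  - assert (Hdis : forall n m, n < m -> forall v, In v (fst (St (Ns n))) -> ~ In v (fst (St (Ns m)))).
    { intros n m Hnm v H1 H2.
      destruct (HSt (Ns n)) as [_ Hv1]. destruct (HSt (Ns m)) as [_ Hv2].
      destruct (Hv1 v H1) as [i [Hi1 [Hi2 Hi3]]].
      destruct (Hv2 v H2) as [j [Hj1 [Hj2 Hj3]]].
      assert (Hle : Ns (S n) <= Ns m).
      { destruct (Nat.eq_dec (S n) m) as [<-|Hne]; [lia|].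
        pose proof (incr_mono Ns Hincr (S n) m ltac:(lia)). lia. }
      rewrite HNs in Hle.
      assert (j <= Cf (snd (St (Ns n)))) by (apply (HCf _ i j); [exact Hi2|congruence]).
      lia. }
    intros n m Hnm v H1 H2. destruct (Nat.lt_total n m) as [Hl|[Hl|Hl]].
    + exact (Hdis n m Hl v H1 H2).
    + contradiction.
    + exact (Hdis m n Hl v H2 H1).
Qed.

Lemma pick_far {Omega : Type} (a : nat -> Omega) (S : Omega -> Prop) :
  (forall v, S v -> vset a v) -> infinite_set S ->
  forall N, exists i, S (a i) /\ N <= i.
Proof.
  intros HS Hinf N. destruct (Hinf (map a (seq 0 N))) as [s [Hs Hn]].
  destruct (HS s Hs) as [i Hi]. exists i. subst. split; [exact Hs|].
  destruct (le_lt_dec N i) as [|Hl]; [assumption|].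
  exfalso. apply Hn. apply in_map. apply in_seq. lia.
Qed.

Theorem mainTheorem1 (Omega : Type) (G : Omega -> Omega -> Prop) :
  (forall a : nat -> Omega,
     inf_walk G a -> finitely_often a ->
     exists r : nat -> Omega,
       ray G r /\ subseq_of r a /\
       (forall S : Omega -> Prop,
          (forall v, S v -> vset a v) -> infinite_set S ->
          prec G (vset r) S /\ prec G S (vset r))) /\
  (forall a : nat -> Omega,
     inf_antiwalk G a -> finitely_often a ->
     exists r : nat -> Omega,
       antiray G r /\ subseq_of r a /\
       (forall S : Omega -> Prop,
          (forall v, S v -> vset a v) -> infinite_set S ->
          prec G (vset r) S /\ prec G S (vset r))).
Proof.
  split.
  - intros a Hw Hfin. destruct (core a Hfin) as [f [Hge [Hinc [Hnext Hinj]]]].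
    exists (fun k => a (f k)). split; [split|split].
    + intros k. unfold inf_walk. simpl. rewrite Hnext. apply Hw.
    + exact Hinj.
    + exists f. split; [exact Hinc|reflexivity].
    + intros S HS Hinf. split; apply prec_of_step with a; auto; intros N.
      * destruct (pick_far a S HS Hinf (Datatypes.S (f N))) as [i [Hs Hi]].
        destruct (seg_walk G a (f N) i Hw ltac:(lia)) as [p [Hp Hv]].
        exists p, i, (a (f N)), (a i). split; [exists N; reflexivity|split; [exact Hs|split; [exact Hp|]]].
        intros v Hin. destruct (Hv v Hin) as [k [H1 [H2 H3]]]. exists k.
        specialize (Hge N). split; [lia|split; [lia|exact H3]].
      * destruct (pick_far a S HS Hinf N) as [i [Hs Hi]].
        destruct (seg_walk G a i (f i) Hw (Hge i)) as [p [Hp Hv]].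
        exists p, (f i), (a i), (a (f i)). split; [exact Hs|split; [exists i; reflexivity|split; [exact Hp|]]].
        intros v Hin. destruct (Hv v Hin) as [k [H1 [H2 H3]]]. exists k.
        split; [lia|split; [lia|exact H3]].
  - intros a Hw Hfin. destruct (core a Hfin) as [f [Hge [Hinc [Hnext Hinj]]]].
    exists (fun k => a (f k)). split; [split|split].
    + intros k. unfold inf_antiwalk. simpl. rewrite Hnext. apply Hw.
    + exact Hinj.
    + exists f. split; [exact Hinc|reflexivity].
    + intros S HS Hinf. split; apply prec_of_step with a; auto; intros N.
      * destruct (pick_far a S HS Hinf N) as [i [Hs Hi]].
        destruct (seg_anti G a i (f i) Hw (Hge i)) as [p [Hp Hv]].
        exists p, (f i), (a (f i)), (a i). split; [exists i; reflexivity|split; [exact Hs|split; [exact Hp|]]].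
        intros v Hin. destruct (Hv v Hin) as [k [H1 [H2 H3]]]. exists k.
        split; [lia|split; [lia|exact H3]].
      * destruct (pick_far a S HS Hinf (Datatypes.S (f N))) as [i [Hs Hi]].
        destruct (seg_anti G a (f N) i Hw ltac:(lia)) as [p [Hp Hv]].
        exists p, i, (a i), (a (f N)). split; [exact Hs|split; [exists N; reflexivity|split; [exact Hp|]]].
        intros v Hin. destruct (Hv v Hin) as [k [H1 [H2 H3]]]. exists k.
        specialize (Hge N). split; [lia|split; [lia|exact H3]].
Qed.
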